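(* Let $G$ be a hued patch and let $\varphi:V(C)\to\mathbb{Z}_2^2$ be a single-hexagon 4-coloring of the boundary $C$ of the outer face of $G$, with central hue $c$ and central color $k$. Let $K=\mathbb{Z}_2^2\setminus\{k\}$, let $H$ be the (bipartite) subgraph of $G$ induced by the vertices of hue different from $c$, and let $\varphi'$ be the restriction of $\varphi$ to $V(H)\cap V(C)$. Then $\varphi$ extends to a proper 4-coloring of $G$ if and only if $\varphi'$ extends to a proper 3-coloring of $H$ using the colors in $K$.
   Context: A patch is a connected plane graph all of whose faces, except possibly the outer face, have length three. A hued graph is a graph with a proper coloring $\psi:V\to\mathbb{Z}_3$ (hue); a dappled graph is a hued graph with additionally a proper coloring $\varphi:V\to\mathbb{Z}_2^2$ (color); for a hued graph $C$ and proper $\varphi:V(C)\to\mathbb{Z}_2^2$, $C^\varphi$ is the corresponding dappled graph. Homomorphisms of dappled graphs map adjacent vertices to adjacent vertices and preserve hue and color. The dappled triangular grid $\mathbf{T}$ has vertex set $\mathbb{Z}^2$, with $(i_1,j_1)$ and $(i_2,j_2)$ adjacent iff $(i_2-i_1,j_2-j_1)\in\{\pm(1,0),\pm(0,1),\pm(1,1)\}$, hue $(i+j)\bmod 3$ and color $(i\bmod 2,j\bmod 2)$ at $(i,j)$. A hexagon is the dappled subgraph of $\mathbf{T}$ induced by a vertex (its center) and its neighbors. A 4-coloring $\varphi$ of a connected hued graph $C$ is a single-hexagon coloring if there is a homomorphism $f$ from $C^\varphi$ to $\mathbf{T}$ whose image lies in a hexagon $X$; the central hue and central color are the hue and color of the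 center of $X$. (In that case a vertex of $C$ has color $k$ iff it has hue $c$.) The boundary $C$ carries the hues inherited from $G$. *)

(* Defs.v *)
From mathcomp Require Import all_boot all_order all_algebra.
Set Implicit Arguments. Unset Strict Implicit. Unset Printing Implicit Defensive.
Import GRing.Theory Num.Theory.

(* Z_2^2 is represented by bool * bool ; Z_3 by 'Z_3. *)

Definition Tadj (p q : int * int) : bool :=
  let di := (q.1 - p.1)%R in let dj := (q.2 - p.2)%R in
  [|| (di == (Posz 1)) && (dj == (Posz 0)), (di == (-1)%R) && (dj == (Posz 0)),
      (di == (Posz 0)) && (dj == (Posz 1)), (di == (Posz 0)) && (dj == (-1)%R),
      (di == (Posz 1)) && (dj == (Posz 1)) | (di == (-1)%R) && (dj == (-1)%R)].

Definition Thue (p : int * int) : nat := absz ((p.1 + p.2)%R %% (Posz 3))%Z.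

Definition Tcol (p : int * int) : bool * bool :=
  (((p.1 %% (Posz 2))%Z == (Posz 1)), ((p.2 %% (Posz 2))%Z == (Posz 1))).

(* A plane graph is given by a finite vertex type V, a finite dart type D
   (two darts per edge), tail : D -> V, the fixed-point-free involution
   alpha (reversing a dart), and the rotation sigma (a permutation of D whose
   cycles are exactly the sets of darts with a common tail).  Faces are the
   orbits of [face alpha sigma].  The outer face is given by [o]:
   [Some od] = the face orbit of the dart od; [None] only when there are no
   darts at all (the one-vertex graph). *)

Definition face (D : finType) (alpha sigma : D -> D) : D -> D :=
  fun d => sigma (alpha d).

Definition adjG (V D : finType) (tail : D -> V) (alpha : D -> D) : rel V :=
  fun u v => [exists d, (tail d == u) && (tail (alpha d) == v)].

Definition is_patch (V D : finType) (tail : D -> V) (alpha sigma : D -> D)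
    (o : option D) : Prop :=
  [/\ 0 < #|V|,
      [/\ (forall d, alpha (alpha d) = d /\ alpha d != d),
          injective sigma &
          (forall d d', tail d = tail d' <-> fconnect sigma d d')],
      ((forall d, tail (alpha d) != tail d)
        /\ (forall d d', tail d = tail d' -> tail (alpha d) = tail (alpha d') -> d = d')),
      (forall u v, connect (adjG tail alpha) u v) &
      match o with
      | None => #|D| = 0
      | Some od =>
          (* genus 0 (Euler's formula V - E + F = 2) *)
          #|V| + fcard (face alpha sigma) D = #|D| %/ 2 + 2
          /\ (forall d, ~~ fconnect (face alpha sigma) od d ->
                        order (face alpha sigma) d = 3)
      end].

Definition onB (V D : finType) (tail : D -> V) (alpha sigma : D -> D)
    (o : option D) (v : V) : bool :=
  match o with
  | None => true
  | Some od => [exists d, fconnect (face alpha sigma) od d && (tail d == v)]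
  end.

Definition adjC (V D : finType) (tail : D -> V) (alpha sigma : D -> D)
    (o : option D) : rel V :=
  fun u v => match o with
  | None => false
  | Some od => [exists d, fconnect (face alpha sigma) od d &&
                 (((tail d == u) && (tail (alpha d) == v))
                  || ((tail d == v) && (tail (alpha d) == u)))]
  end.

(* phi (restricted to V(C)) is a single-hexagon coloring of C^phi, the witness
   hexagon having center z *)
Definition single_hexagon_at (V D : finType) (tail : D -> V)
    (alpha sigma : D -> D) (o : option D) (psi : V -> 'Z_3)
    (phi : V -> bool * bool) (z : int * int) : Prop :=
  (forall u v, adjC tail alpha sigma o u v -> phi u != phi v) /\
  exists f : V -> int * int,
    [/\ (forall u v, adjC tail alpha sigma o u v -> Tadj (f u) (f v)),
        (forall v, onB tail alpha sigma o v ->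
                   Thue (f v) = nat_of_ord (psi v) /\ Tcol (f v) = phi v) &
        (forall v, onB tail alpha sigma o v -> f v = z \/ Tadj z (f v))].

(* Main.v *)
Require Import Defs.
From mathcomp Require Import all_boot all_order all_algebra.
From HB Require Import structures.
From mathcomp Require Import zify ring.
Import GRing.Theory Num.Theory.

Module Helpers.
Local Open Scope ring_scope.
Lemma ffunZr (I : finType) (k : rat) (f : {ffun I -> rat^o}) x : (k *: f) x = k * f x.
Proof. by rewrite ffunE. Qed.
Lemma ffunDr (I : finType) (f g : {ffun I -> rat^o}) x : (f + g) x = f x + g x.
Proof. by rewrite ffunE. Qed.
Lemma ffunNr (I : finType) (f : {ffun I -> rat^o}) x : (- f) x = - f x.
Proof. by rewrite ffunE. Qed.
Lemma ffunBr (I : finType) (f g : {ffun I -> rat^o}) x : (f - g) x = f x - g x.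
Proof. by rewrite ffunE ffunNr. Qed.
Lemma ffun0r (I : finType) x : (0 : {ffun I -> rat^o}) x = 0.
Proof. by rewrite ffunE. Qed.
Lemma diag_dim (I : finType) (U : {vspace {ffun I -> rat^o}}) (s : seq I)
  (v : I -> {ffun I -> rat^o}) :
  uniq s -> (forall a, a \in s -> v a \in U) ->
  (forall a b, a \in s -> b \in s -> v a b = (a == b)%:R) -> (size s <= \dim U)%N.
Proof.
case: s => [//|a0 s] us sU ev.
set s1 := a0 :: s.
have fr : free (map v s1).
  apply/(@freeP _ _ _ (in_tuple (map v s1))) => k Hk i.
  have /(congr1 (fun w : {ffun I -> rat^o} => w (nth a0 s1 i))) := Hk.
  have iS : (i < size s1)%N by rewrite -(size_map v); exact: ltn_ord.
  rewrite sum_ffunE ffun0r (bigD1 i) // big1 => [|j ji].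
    rewrite ffunZr (nth_map a0) // ev ?mem_nth // eqxx.
    by move=> H; rewrite -[RHS]H /= mulr1 [RHS]addr0.
  have jS : (j < size s1)%N by rewrite -(size_map v); exact: ltn_ord.
  rewrite ffunZr (nth_map a0) // ev ?mem_nth // nth_uniq //.
  by rewrite (inj_eq val_inj) (negPf ji) mulr0.
rewrite -(size_map v) -(eqP fr).
apply: dimvS; apply/span_subvP => w /mapP [a aS ->]; exact: sU.
Qed.


Lemma conn_pred (T : finType) (e : rel T) (P : T -> Prop) x y :
  (forall u w, e u w -> P u -> P w) -> P x -> connect e x y -> P y.
Proof.
move=> H Px /connectP [p pth ->]; elim: p x pth Px => //= z p IH x /andP [exz pz] Px.
exact: (IH z pz (H _ _ exz Px)).
Qed.

Section LinAlg.
Variables (V D : finType) (tail : D -> V) (alpha sigma : D -> D).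
Hypothesis Ha : forall d, alpha (alpha d) = d /\ alpha d != d.
Hypothesis Hsi : injective sigma.
Hypothesis Hts : forall d d', tail d = tail d' <-> fconnect sigma d d'.
Hypothesis Hconn : forall u v, connect (adjG tail alpha) u v.
Hypothesis Heul : (#|V| + fcard (face alpha sigma) D = #|D| %/ 2 + 2)%N.

Local Notation fc := (face alpha sigma).

Let alphaK : involutive alpha. Proof. by move=> d; case: (Ha d). Qed.
Let alpha_inj : injective alpha := inv_inj alphaK.
Let fc_inj : injective fc.
Proof. by move=> x y; rewrite /face => /Hsi; exact: alpha_inj. Qed.

Let tail_sigma d : tail (sigma d) = tail d.
Proof. by apply/esym/Hts; apply: fconnect1. Qed.
Let tail_fc d : tail (fc d) = tail (alpha d).
Proof. by rewrite /face tail_sigma. Qed.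

Lemma telescope (h : D -> rat) x :
  \sum_(e | fconnect fc x e) (h (fc e) - h e) = 0.
Proof.
rewrite sumrB [X in _ - X](reindex_inj fc_inj) /=.
rewrite (eq_bigl (fun e => fconnect fc x (fc e))) ?subrr // => e.
by rewrite -same_fconnect1_r.
Qed.

Let X := {ffun D -> rat^o}.
Let Y := {ffun V -> rat^o}.

Definition Qf (g : X) : X := [ffun d => g d + g (alpha d)].
Definition Ff (g : X) : X := [ffun x => \sum_(e | fconnect fc x e) g e].
Definition Df (f : Y) : X := [ffun d => f (tail (alpha d)) - f (tail d)].

Fact Qf_lin : linear Qf.
Proof.
move=> a u v; apply/ffunP => x.
rewrite !(ffunE, ffunDr, ffunZr) /=.
by rewrite scalerDr addrACA.
Qed.
Fact Ff_lin : linear Ff.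
Proof.
move=> a u v; apply/ffunP => x.
rewrite !(ffunE, ffunDr, ffunZr) /=.
rewrite scaler_sumr -big_split /=; apply: eq_bigr => e _.
by rewrite ffunDr ffunZr.
Qed.
Fact Df_lin : linear Df.
Proof.
move=> a u v; apply/ffunP => x.
rewrite !(ffunE, ffunDr, ffunZr) /=.
by rewrite scalerBr addrACA opprD.
Qed.


Let QL : {linear X -> X} := HB.pack Qf (GRing.isLinear.Build _ _ _ _ Qf Qf_lin).
Let FL : {linear X -> X} := HB.pack Ff (GRing.isLinear.Build _ _ _ _ Ff Ff_lin).
Let DL : {linear Y -> X} := HB.pack Df (GRing.isLinear.Build _ _ _ _ Df Df_lin).
Let Q := linfun QL.
Let F := linfun FL.
Let Dd := linfun DL.
Let QE g : Q g = Qf g. Proof. exact: (lfunE QL). Qed.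
Let FE g : F g = Ff g. Proof. exact: (lfunE FL). Qed.
Let DE g : Dd g = Df g. Proof. exact: (lfunE DL). Qed.

Let S' := (lker Q :&: lker F)%VS.

Lemma img_D_sub : (limg Dd <= S')%VS.
Proof.
apply/subvP => g /memv_imgP [f _ ->]; rewrite memv_cap !memv_ker DE.
apply/andP; split; apply/eqP/ffunP => x.
  by rewrite QE !ffunE alphaK addrA subrK subrr.
rewrite FE !ffunE ?ffun0r; apply: etrans (telescope (fun e => f (tail e)) x).
by apply: eq_bigr => e _; rewrite ffunE tail_fc.
Qed.

Lemma dim_img_D : (#|V| <= \dim (limg Dd) + 1)%N.
Proof.
have := limg_ker_dim Dd fullv; rewrite capfv dimvf /dim /= muln1 => <-.
rewrite addnC leq_add2l.
pose one : Y := [ffun => 1].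
apply: (@leq_trans (\dim <[one]>)); last by rewrite dim_vline leq_b1.
apply: dimvS; apply/subvP => f; rewrite memv_ker DE => /eqP Hf.
have Hadj : forall u w, adjG tail alpha u w -> f u = f w.
  move=> u w /existsP [d /andP [/eqP <- /eqP <-]].
  have /ffunP /(_ d) := Hf; rewrite !ffunE ?ffun0r => /eqP.
  by rewrite subr_eq0 => /eqP ->.
case: (pickP (fun _ : V => true)) => [v0 _ | none]; last first.
  have -> : f = 0 by apply/ffunP => v; have := none v.
  exact: mem0v.
apply/vlineP; exists (f v0); apply/ffunP => v.
rewrite ffunZr ffunE mulr1.
apply: (@conn_pred _ (adjG tail alpha) (fun w => f w = f v0) v0 v _ erefl (Hconn v0 v)).
by move=> u w e Pu; rewrite -(Hadj u w e).
Qed.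


Let R := [set d | (enum_rank d < enum_rank (alpha d))%N].

Lemma R_alpha d : (alpha d \in R) = (d \notin R).
Proof.
rewrite !inE alphaK; case: (ltngtP (enum_rank d) (enum_rank (alpha d))) => // h.
move/val_inj/enum_rank_inj: h => h.
by have := proj2 (Ha d); rewrite -h eqxx.
Qed.

Lemma card_R : #|D| = (#|R| + #|R|)%N.
Proof.
rewrite -(cardsC R); congr (_ + _)%N.
have -> : ~: R = alpha @: R.
  apply/setP => x; rewrite inE; apply/idP/imsetP => [xR | [y yR ->]].
    by exists (alpha x); rewrite ?alphaK // R_alpha.
  by rewrite R_alpha negbK.
by rewrite card_imset.
Qed.

Let delta (a : D) : X := [ffun x => (x == a)%:R].

Lemma dim_img_Q : (#|R| <= \dim (limg Q))%N.
Proof.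
rewrite cardE; apply: (@diag_dim _ _ (enum R) (fun a => Q (delta a))).
- exact: enum_uniq.
- by move=> a _; apply: memv_img; apply: memvf.
move=> a b; rewrite !mem_enum => aR bR; rewrite QE !ffunE.
have -> : (alpha b == a) = false.
  by apply/negP => /eqP ba; move: aR; rewrite -ba R_alpha bR.
by rewrite addr0 eq_sym.
Qed.

Let J (r : D) : X := [ffun x => (fconnect fc x r)%:R].

Lemma sum_pred1 (P : pred D) d : \sum_(e | P e) ((e == d)%:R : rat) = (P d)%:R.
Proof.
case Pd: (P d).
  rewrite (bigD1 d) // eqxx big1 ?addr0 // => e /andP [_ ne]; by rewrite (negPf ne).
rewrite big1 // => e Pe; case: eqP => // ed; by move: Pd; rewrite -ed Pe.
Qed.

Lemma F_delta d : F (delta d - delta (alpha d)) = J d - J (alpha d).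
Proof.
rewrite FE; apply/ffunP => x; rewrite !ffunE.
under eq_bigr => e _ do rewrite ffunE ffunNr !ffunE.
by rewrite sumrB !sum_pred1.
Qed.

Lemma delta_ker d : delta d - delta (alpha d) \in lker Q.
Proof.
rewrite memv_ker QE; apply/eqP/ffunP => x; rewrite !ffunE.
have e1 : (alpha x == d) = (x == alpha d) by rewrite -{1}(alphaK d) (inj_eq alpha_inj).
rewrite e1 (inj_eq alpha_inj).
by rewrite addrA subrK subrr.
Qed.

Lemma dart_conn (P : D -> Prop) r0 : P r0 -> (forall d, P d -> P (alpha d)) ->
  (forall d, P d -> P (fc d)) -> forall d, P d.
Proof.
move=> P0 Pa Pf.
have Psig d : P d -> P (sigma d) by move=> /Pa /Pf; rewrite /face alphaK.
have Pvert d d' : P d -> tail d = tail d' -> P d'.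
  move=> Pd /Hts; apply: conn_pred Pd => u w /eqP <-; exact: Psig.
have good u : exists d, tail d = u /\ P d.
  apply: (@conn_pred _ (adjG tail alpha) (fun u => exists d, tail d = u /\ P d) (tail r0) u _ _ (Hconn _ _)); last by exists r0.
  move=> u' w /existsP [e /andP [/eqP te /eqP tae]] [d [td Pd]].
  exists (alpha e); split => //; apply: Pa; apply: (Pvert d) => //; by rewrite td te.
move=> d; have [d' [td' Pd']] := good (tail d); exact: (Pvert d').
Qed.


Lemma J_in_W r0 d : J d - J r0 \in (F @: lker Q)%VS.
Proof.
apply: (@dart_conn (fun d => J d - J r0 \in (F @: lker Q)%VS) r0) => [|e He|e He].
- by rewrite subrr mem0v.
- have -> : J (alpha e) - J r0 = (J e - J r0) - (J e - J (alpha e)).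
    by rewrite opprB [RHS]addrC [RHS]addrA subrK.
  by apply: memvB => //; rewrite -F_delta; apply: memv_img; exact: delta_ker.
- suff -> : J (fc e) = J e by [].
  by apply/ffunP => x; rewrite !ffunE -same_fconnect1_r.
Qed.

Let fsym : connect_sym (frel fc) := fconnect_sym fc_inj.

Lemma dim_W (d0 : D) : (fcard fc D <= \dim (F @: lker Q) + 1)%N.
Proof.
set r0 := froot fc d0.
have r0R : r0 \in enum (froots fc) by rewrite mem_enum; exact: roots_root.
have -> : fcard fc D = #|froots fc|.
  by apply: eq_card => x; rewrite !inE andbT.
rewrite cardE.
have H : (size (rem r0 (enum (froots fc))) <= \dim (F @: lker Q))%N.
  apply: (@diag_dim _ (F @: lker Q) (rem r0 (enum (froots fc))) (fun r => J r - J r0)).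
  - exact: rem_uniq (enum_uniq _).
  - by move=> a _; exact: J_in_W.
  move=> a b; rewrite !mem_rem_uniq ?enum_uniq // !inE !mem_enum.
  move=> /andP [ar0 ra] /andP [br0 rb]; rewrite !ffunE.
  have rc x y : froots fc x -> froots fc y -> fconnect fc x y = (x == y).
    by move=> /eqP rx /eqP ry; rewrite -root_connect // rx ry.
  by rewrite !rc // ?roots_root // (negPf br0) subr0 eq_sym.
rewrite size_rem // in H.
have : (0 < size (enum (froots fc)))%N by move: r0R; case: (enum _).
by move: H; case: (size _) => // n; rewrite addn1.
Qed.


Lemma potential (g : D -> rat) : (forall d, g (alpha d) = - g d) ->
  (forall x, \sum_(e | fconnect fc x e) g e = 0) ->
  exists f : V -> rat, forall d, g d = f (tail (alpha d)) - f (tail d).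
Proof.
move=> ga gs.
case: (pickP (fun _ : D => true)) => [d0 _ | none]; last first.
  by exists (fun _ => 0) => d; have := none d.
pose gf : X := [ffun d => g d].
have gS : gf \in S'.
  rewrite memv_cap !memv_ker QE FE; apply/andP; split; apply/eqP/ffunP => x; rewrite !ffunE.
  - by rewrite ga subrr.
  - by apply: etrans (gs x); apply: eq_bigr => e _; rewrite ffunE.
have eqB : limg Dd == S'.
  rewrite eqEdim img_D_sub /=.
  have h1 := limg_ker_dim F (lker Q).
  have h2 := limg_ker_dim Q fullv; rewrite capfv dimvf /dim /= muln1 in h2.
  have h3 := dim_img_Q. have h4 := dim_W d0. have h5 := dim_img_D.
  have h6 := card_R. have h7 := Heul.
  rewrite /S'. rewrite h6 addnn -mul2n mulKn // in h7. set a := \dim (lker Q) in h1 h2. set b := \dim (F @: lker Q) in h1 h4. set c := \dim (limg Q) in h2 h3. have hk : (a <= #|R|)%N by move: h2 h3; rewrite h6; lia. have hb : (#|R| <= b + #|V| - 1)%N by lia. lia.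
have : gf \in limg Dd by rewrite (eqP eqB).
case/memv_imgP => f _ Hf; exists (fun v => f v) => d.
by have := congr1 (fun w : X => w d) Hf; rewrite DE !ffunE.
Qed.

End LinAlg.


Definition padd (p q : int * int) : int * int := (p.1 + q.1, p.2 + q.2).

Definition dirv (h1 h2 : nat) (c1 c2 : bool * bool) : int * int :=
  let up := (h2 == (h1 + 1) %% 3)%N in
  match up, (c1.1 != c2.1), (c1.2 != c2.2) with
  | true, true, false => (1, 0) | true, false, true => (0, 1)
  | true, true, true => (-1, -1)
  | false, true, false => (-1, 0) | false, false, true => (0, -1)
  | false, true, true => (1, 1)
  | _, _, _ => (0, 0) end.

Lemma Thue_lt p : (Thue p < 3)%N.
Proof. rewrite /Thue; lia. Qed.

Lemma Thue_add (a b x y : int) :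
  Thue (a + x, b + y) = ((Thue (a, b) + absz ((x + y) %% 3)%Z) %% 3)%N.
Proof. rewrite /Thue /=; lia. Qed.

Lemma par_add (a x : int) :
  (((a + x) %% 2)%Z == 1) = ((((a %% 2)%Z == 1)) != (((x %% 2)%Z == 1))).
Proof.
case: (boolP ((a %% 2)%Z == 1)) => /eqP ha; case: (boolP ((x %% 2)%Z == 1)) => /eqP hx /=;
apply/eqP; lia.
Qed.

Definition dirs : seq (int * int) :=
  [:: (1, 0); (-1, 0); (0, 1); (0, -1); (1, 1); (-1, -1)].
Definition xorc (c d : bool * bool) := (c.1 != d.1, c.2 != d.2).
Definition dhue (d : int * int) : nat := absz ((d.1 + d.2) %% 3)%Z.
Definition dcol (d : int * int) : bool * bool :=
  (((d.1 %% 2)%Z == 1), ((d.2 %% 2)%Z == 1)).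

Lemma Tadj_dirs p q : Tadj p q = ((q.1 - p.1, q.2 - p.2) \in dirs).
Proof. by rewrite /Tadj !inE !xpair_eqE. Qed.

Lemma padd_diff p q : q = padd p (q.1 - p.1, q.2 - p.2).
Proof. by case: p q => a b [c d]; rewrite /padd /=; congr (_, _); lia. Qed.

Lemma step_gen p d : Thue (padd p d) = ((Thue p + dhue d) %% 3)%N /\
   Tcol (padd p d) = xorc (Tcol p) (dcol d).
Proof.
case: p d => a b [x y]; split; first by rewrite /padd /= Thue_add.
by rewrite /padd /Tcol /xorc /dcol /= !par_add.
Qed.

Lemma Tadj_padd p d : Tadj p (padd p d) = (d \in dirs).
Proof.
case: p d => a b [x y]; rewrite Tadj_dirs /padd /=.
have -> : a + x - a = x by lia.
by have -> : b + y - b = y by lia.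
Qed.

Definition hs : seq nat := [:: 0; 1; 2]%N.
Definition cs : seq (bool * bool) := [:: (false,false); (false,true); (true,false); (true,true)].
Lemma in_hs h : (h < 3)%N -> h \in hs. Proof. by case: h => [|[|[|]]]. Qed.
Lemma in_cs c : c \in cs. Proof. by case: c => [[] []]. Qed.
Arguments in_hs {h}.

Definition F1b := all (fun h1 => all (fun h2 => all (fun c1 => all (fun c2 =>
  (h1 != h2) ==> (c1 != c2) ==>
  [&& dirv h1 h2 c1 c2 \in dirs, ((h1 + dhue (dirv h1 h2 c1 c2)) %% 3 == h2)%N &
      xorc c1 (dcol (dirv h1 h2 c1 c2)) == c2]) cs) cs) hs) hs.
Lemma F1 : F1b. Proof. by vm_compute. Qed.

Definition F2b := all (fun h1 => all (fun c1 =>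
  all (fun d => d == dirv h1 ((h1 + dhue d) %% 3) c1 (xorc c1 (dcol d))) dirs) cs) hs.
Lemma F2 : F2b. Proof. by vm_compute. Qed.

Definition F3b := all (fun h1 => all (fun h2 => all (fun c1 => all (fun c2 =>
  (h1 != h2) ==> (c1 != c2) ==>
  (dirv h2 h1 c2 c1 == (- (dirv h1 h2 c1 c2).1, - (dirv h1 h2 c1 c2).2))) cs) cs) hs) hs.
Lemma F3 : F3b. Proof. by vm_compute. Qed.

Definition F4b := all (fun h1 => all (fun h2 => all (fun h3 => all (fun c1 =>
  all (fun c2 => all (fun c3 =>
  [&& h1 != h2, h2 != h3, h3 != h1, c1 != c2, c2 != c3 & c3 != c1] ==>
  let d1 := dirv h1 h2 c1 c2 in let d2 := dirv h2 h3 c2 c3 in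
  let d3 := dirv h3 h1 c3 c1 in
  (d1.1 + d2.1 + d3.1 == 0) && (d1.2 + d2.2 + d3.2 == 0)) cs) cs) cs) hs) hs) hs.
Lemma F4 : F4b. Proof. by vm_compute. Qed.

Lemma step_ok p h2 c2 : (h2 < 3)%N -> Thue p != h2 -> Tcol p != c2 ->
  Tadj p (padd p (dirv (Thue p) h2 (Tcol p) c2)) /\
  Thue (padd p (dirv (Thue p) h2 (Tcol p) c2)) = h2 /\
  Tcol (padd p (dirv (Thue p) h2 (Tcol p) c2)) = c2.
Proof.
move=> h2l n1 n2.
have := F1; move=> /allP /(_ _ (in_hs (Thue_lt p))) /allP /(_ _ (in_hs h2l)).
move=> /allP /(_ _ (in_cs (Tcol p))) /allP /(_ _ (in_cs c2)).
rewrite n1 n2 /= => /and3P [dd /eqP hh /eqP cc].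
have [t1 t2] := step_gen p (dirv (Thue p) h2 (Tcol p) c2).
by rewrite Tadj_padd t1 t2 hh cc.
Qed.

Lemma step_unique p q : Tadj p q ->
  q = padd p (dirv (Thue p) (Thue q) (Tcol p) (Tcol q)).
Proof.
rewrite Tadj_dirs => dd.
have eq := padd_diff p q.
have [t1 t2] := step_gen p (q.1 - p.1, q.2 - p.2).
rewrite -eq in t1 t2; rewrite t1 t2.
have := F2; move=> /allP /(_ _ (in_hs (Thue_lt p))) /allP /(_ _ (in_cs (Tcol p))).
by move=> /allP /(_ _ dd) /eqP <-.
Qed.

Arguments step_unique {p q}.

Lemma dirv_anti h1 h2 c1 c2 : (h1 < 3)%N -> (h2 < 3)%N -> h1 != h2 -> c1 != c2 ->
  dirv h2 h1 c2 c1 = (- (dirv h1 h2 c1 c2).1, - (dirv h1 h2 c1 c2).2).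
Proof.
move=> l1 l2 n1 n2.
have := F3; move=> /allP /(_ _ (in_hs l1)) /allP /(_ _ (in_hs l2)).
move=> /allP /(_ _ (in_cs c1)) /allP /(_ _ (in_cs c2)).
by rewrite n1 n2 /= => /eqP.
Qed.

Lemma dirv_tri h1 h2 h3 c1 c2 c3 : (h1 < 3)%N -> (h2 < 3)%N -> (h3 < 3)%N ->
  h1 != h2 -> h2 != h3 -> h3 != h1 -> c1 != c2 -> c2 != c3 -> c3 != c1 ->
  (dirv h1 h2 c1 c2).1 + (dirv h2 h3 c2 c3).1 + (dirv h3 h1 c3 c1).1 = 0 /\
  (dirv h1 h2 c1 c2).2 + (dirv h2 h3 c2 c3).2 + (dirv h3 h1 c3 c1).2 = 0.
Proof.
move=> l1 l2 l3 n1 n2 n3 m1 m2 m3.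
have := F4; move=> /allP /(_ _ (in_hs l1)) /allP /(_ _ (in_hs l2)) /allP /(_ _ (in_hs l3)).
move=> /allP /(_ _ (in_cs c1)) /allP /(_ _ (in_cs c2)) /allP /(_ _ (in_cs c3)).
by rewrite n1 n2 n3 m1 m2 m3 /= => /andP [/eqP -> /eqP ->].
Qed.

Definition Fdb := all (fun d => (dcol d != (false, false)) && (dhue d != 0)%N) dirs.
Lemma Fd : Fdb. Proof. by vm_compute. Qed.

Lemma Tadj_hue_col p q : Tadj p q -> Thue p != Thue q /\ Tcol p != Tcol q.
Proof.
rewrite Tadj_dirs => dd; have eq := padd_diff p q.
have [t1 t2] := step_gen p (q.1 - p.1, q.2 - p.2); rewrite -eq in t1 t2.
have := Fd => /allP /(_ _ dd) /andP [c0 h0].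
rewrite t1 t2; split.
  have := Thue_lt p; move: h0; rewrite /dhue; lia.
move: c0; case: (Tcol p) => [[] []]; case: (dcol _) => [[] []] //.
Qed.

Arguments Tadj_hue_col {p q}.

Lemma Tadj_sym p q : Tadj p q = Tadj q p.
Proof.
rewrite !Tadj_dirs !inE !xpair_eqE.
case: p q => a b [c d] /=.
apply/idP/idP => H; repeat (case/orP: H => H; [ move/andP: H => [/eqP H1 /eqP H2]; apply/orP; (try (left; apply/andP; split; apply/eqP; lia)); right| ]); try (move/andP: H => [/eqP H1 /eqP H2]); rewrite ?orbF; repeat (apply/orP; (try (left; apply/andP; split; apply/eqP; lia)); right); apply/andP; split; apply/eqP; lia.
Qed.

Definition r0 (a b : int) : int * int :=
  if ((a + b) %% 3 == 1)%Z then
    (if (a <= 0) && (b <= 0) then (-1, -1) else if a <= b then (0, 1) else (1, 0))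
  else (if (0 <= a) && (0 <= b) then (1, 1) else if a <= b then (-1, 0) else (0, -1)).

Definition retract (z p : int * int) := padd z (r0 (p.1 - z.1) (p.2 - z.2)).

Lemma r0_dirs a b : r0 a b \in dirs.
Proof. by rewrite /r0; repeat case: ifP. Qed.

Definition Fidb := all (fun d => r0 d.1 d.2 == d) dirs.
Lemma Fid : Fidb. Proof. by vm_compute. Qed.

Lemma retract_id z d : d \in dirs -> retract z (padd z d) = padd z d.
Proof.
move=> dd; rewrite /retract /padd /=.
have -> : z.1 + d.1 - z.1 = d.1 by lia.
have -> : z.2 + d.2 - z.2 = d.2 by lia.
by have := Fid => /allP /(_ _ dd) /eqP ->.
Qed.

Lemma r0_adj a b x y : ((a + b) %% 3 = 1)%Z -> (x, y) \in dirs ->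
  ((a + x + (b + y)) %% 3 = 2)%Z ->
  ((r0 (a + x) (b + y)).1 - (r0 a b).1, (r0 (a + x) (b + y)).2 - (r0 a b).2) \in dirs.
Proof.
move=> h1 xy h2; rewrite /r0 h1 h2 eqxx /=.
move: xy; rewrite !inE !xpair_eqE.
repeat case: ifP; move=> *; try done; exfalso; lia.
Qed.

Lemma retract_adj0 z p q : Tadj p q ->
  ((p.1 - z.1 + (p.2 - z.2)) %% 3 = 1)%Z -> ((q.1 - z.1 + (q.2 - z.2)) %% 3 = 2)%Z ->
  Tadj (retract z p) (retract z q).
Proof.
rewrite Tadj_dirs => dd h1 h2.
have e1 : q.1 - z.1 = (p.1 - z.1) + (q.1 - p.1) by lia.
have e2 : q.2 - z.2 = (p.2 - z.2) + (q.2 - p.2) by lia.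
rewrite e1 e2 in h2.
have := @r0_adj _ _ _ _ h1 dd h2.
rewrite /retract -e1 -e2 Tadj_dirs /padd /=.
set u := r0 _ _; set w := r0 _ _.
have -> : z.1 + u.1 - (z.1 + w.1) = u.1 - w.1 by lia.
by have -> : z.2 + u.2 - (z.2 + w.2) = u.2 - w.2 by lia.
Qed.

Lemma retract_adj z p q : Tadj p q -> Thue p != Thue z -> Thue q != Thue z ->
  Tadj (retract z p) (retract z q).
Proof.
move=> pq hp hq; have [hpq _] := @Tadj_hue_col _ _ pq.
have : (((p.1 - z.1 + (p.2 - z.2)) %% 3 = 1)%Z /\ ((q.1 - z.1 + (q.2 - z.2)) %% 3 = 2)%Z) \/
       (((p.1 - z.1 + (p.2 - z.2)) %% 3 = 2)%Z /\ ((q.1 - z.1 + (q.2 - z.2)) %% 3 = 1)%Z).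
  by move: hp hq hpq; rewrite /Thue; lia.
case=> [[h1 h2] | [h1 h2]]; first exact: retract_adj0.
by rewrite Tadj_sym; apply: retract_adj0 => //; rewrite Tadj_sym.
Qed.

Lemma retract_near z p : Tadj z (retract z p).
Proof. by rewrite /retract Tadj_padd r0_dirs. Qed.

Lemma retract_fix z p : Tadj z p -> retract z p = p.
Proof.
rewrite Tadj_dirs => dd; rewrite [in RHS](padd_diff z p) -retract_id //.
by rewrite -padd_diff.
Qed.

End Helpers.
Import Helpers.

Definition sel (b : bool) (p : int * int) : int := if b then p.1 else p.2.

Theorem corollary11 (V D : finType) (tail : D -> V) (alpha sigma : D -> D)
    (o : option D) (psi : V -> 'Z_3) (phi : V -> bool * bool)
    (c : 'Z_3) (k : bool * bool) :
  is_patch tail alpha sigma o ->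
  (forall u v, adjG tail alpha u v -> psi u != psi v) ->
  (exists z, single_hexagon_at tail alpha sigma o psi phi z
             /\ Thue z = nat_of_ord c /\ Tcol z = k) ->
  (exists chi : V -> bool * bool,
      (forall u v, adjG tail alpha u v -> chi u != chi v) /\
      (forall v, onB tail alpha sigma o v -> chi v = phi v))
  <->
  (exists chi : V -> bool * bool,
      [/\ (forall v, psi v != c -> chi v != k),
          (forall u v, psi u != c -> psi v != c -> adjG tail alpha u v ->
                       chi u != chi v) &
          (forall v, psi v != c -> onB tail alpha sigma o v -> chi v = phi v)]).
Proof.
move=> [Vpos [Ha Hsi Hts] [Hloop Hsimple] Hconn Ho] Hpsi.
move=> [z [[Hphi [f0 [f0adj f0B f0hex]]] [Hzh Hzc]]].
have alphaK : involutive alpha by move=> d; case: (Ha d).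
have psi_nat u v : psi u != psi v -> (psi u : nat) != psi v.
  by apply: contra => /eqP /val_inj ->.
have adj_d d : adjG tail alpha (tail d) (tail (alpha d)).
  by apply/existsP; exists d; rewrite !eqxx.
have psi_lt v : (psi v < 3)%N by exact: ltn_ord.
split; last first.
  case=> chi [chik chiP chiB].
  exists (fun v => if psi v == c then k else chi v); split.
    move=> u v uv; have := Hpsi u v uv.
    case: (psi u =P c) => hu; case: (psi v =P c) => hv.
    - by rewrite hu hv eqxx.
    - by move=> _; rewrite eq_sym; apply: chik; apply/eqP.
    - by move=> _; apply: chik; apply/eqP.
    - by move=> _; apply: chiP => //; apply/eqP.
  move=> v vB; case: (psi v =P c) => hv; last by apply: chiB => //; apply/eqP.
  have [th tc] := f0B v vB.
  case: (f0hex v vB) => [e|adj].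
    by rewrite -tc e Hzc.
  have [hh _] := Tadj_hue_col adj.
  by move: hh; rewrite th Hzh hv eqxx.
case=> chi [chiP chiB].
case: o Ho f0B f0hex Hphi f0adj chiB => [od [Heul Htri]|Hnone] f0B f0hex Hphi f0adj chiB;
  last first.
  exists phi; split.
  - move=> v hv; have [th tc] := f0B v isT.
    case: (f0hex v isT) => [e|adj].
      by move: hv; rewrite -(inj_eq val_inj) /= -th e Hzh eqxx.
    by have [_ hc] := Tadj_hue_col adj; rewrite -tc -Hzc eq_sym.
  - by move=> u v _ _ /existsP [d _]; have := card0_eq Hnone d.
  - by [].
Local Open Scope ring_scope.
set fc := face alpha sigma.
have tail_sigma d : tail (sigma d) = tail d by apply/esym/Hts; apply: fconnect1.
have tail_fc d : tail (fc d) = tail (alpha d) by rewrite /fc /face tail_sigma.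
have fc_inj : injective fc.
  by move=> x y; rewrite /fc /face => /Hsi; exact: (inv_inj alphaK).
have Hpsi' d : (psi (tail d) : nat) != psi (tail (alpha d)).
  exact: psi_nat _ _ (Hpsi _ _ (adj_d d)).
have Hchi' d : chi (tail d) != chi (tail (alpha d)) := chiP _ _ (adj_d d).
pose dl d := dirv (psi (tail d)) (psi (tail (alpha d))) (chi (tail d)) (chi (tail (alpha d))).
have dl_anti d : dl (alpha d) = ((- (dl d).1)%R, (- (dl d).2)%R).
  by rewrite /dl alphaK; apply: dirv_anti.
have outer_edge e : fconnect fc od e -> f0 (tail (alpha e)) = padd (f0 (tail e)) (dl e).
  move=> oe.
  have Bu : onB tail alpha sigma (Some od) (tail e).
    by apply/existsP; exists e; rewrite oe eqxx.
  have Bw : onB tail alpha sigma (Some od) (tail (alpha e)).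
    apply/existsP; exists (fc e); rewrite tail_fc eqxx andbT.
    exact: connect_trans oe (fconnect1 _ _).
  have Cuw : adjC tail alpha sigma (Some od) (tail e) (tail (alpha e)).
    by apply/existsP; exists e; rewrite oe !eqxx.
  have := step_unique (f0adj _ _ Cuw).
  have [h1 c1] := f0B _ Bu; have [h2 c2] := f0B _ Bw.
  by rewrite h1 h2 c1 c2 -(chiB _ Bu) -(chiB _ Bw).
have sel_padd b p q : sel b (padd p q) = (sel b p + sel b q)%R by case: b.
have ga b d : ((sel b (dl (alpha d)))%:~R : rat) = (- (sel b (dl d))%:~R)%R.
  by rewrite dl_anti; case: b; rewrite /= intrN.
have gs b x : (\sum_(e | fconnect fc x e) ((sel b (dl e))%:~R : rat) = 0)%R.
  case: (boolP (fconnect fc od x)) => ox.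
    apply: (etrans _ (telescope _ _ _ Ha Hsi (fun e => (sel b (f0 (tail e)))%:~R) x)).
    apply: eq_bigr => e xe.
    have oe : fconnect fc od e := connect_trans ox xe.
    rewrite tail_fc (outer_edge e oe) sel_padd intrD.
    by rewrite addrAC subrr add0r.
  have o3 := Htri x ox.
  rewrite (eq_bigl (fun e => e \in orbit fc x)) => [|e]; last by rewrite fconnect_orbit.
  rewrite -big_uniq ?orbit_uniq // /orbit o3 /= !big_cons big_nil.
  have f3 : fc (fc (fc x)) = x.
    by have := iter_order fc_inj x; rewrite o3.
  have t1 : tail (alpha (fc (fc x))) = tail x by rewrite -tail_fc f3.
  have t2 : tail (fc (fc x)) = tail (alpha (fc x)) by rewrite tail_fc.
  have t3 : tail (fc x) = tail (alpha x) by rewrite tail_fc.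
  have := Hpsi' x; have := Hpsi' (fc x); have := Hpsi' (fc (fc x)).
  have := Hchi' x; have := Hchi' (fc x); have := Hchi' (fc (fc x)).
  rewrite /dl t1 t2 t3 => m3 m2 m1 n3 n2 n1.
  have [s1 s2] := @dirv_tri _ _ _ _ _ _ (psi_lt _) (psi_lt _) (psi_lt _) n1 n2 n3 m1 m2 m3.
  rewrite addr0 addrA -!intrD.
  by case: b; rewrite /= ?s1 ?s2.
have [f1 Hf1] := potential _ _ _ _ _ Ha Hsi Hts Hconn Heul
  (fun d => (sel true (dl d))%:~R) (ga true) (gs true).
have [f2 Hf2] := potential _ _ _ _ _ Ha Hsi Hts Hconn Heul
  (fun d => (sel false (dl d))%:~R) (ga false) (gs false).
set v0 := tail od.
have NE (f : V -> rat) (b : bool) :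
    (forall d, (sel b (dl d))%:~R = f (tail (alpha d)) - f (tail d)) ->
    forall v, (numq (f v - f v0))%:~R = f v - f v0.
  move=> Hf v.
  have [n ->] : exists n : int, f v - f v0 = n%:~R.
    apply: (@conn_pred _ (adjG tail alpha) (fun w => exists n : int, f w - f v0 = n%:~R)
             v0 v _ _ (Hconn v0 v)); last by exists 0; rewrite subrr.
    move=> u w /existsP [d /andP [/eqP tu /eqP tw]] [n hn].
    exists (n + sel b (dl d)); rewrite intrD -hn Hf tu tw; ring.
  by rewrite numq_int.
have Nlift (f : V -> rat) (b : bool) :
    (forall d, (sel b (dl d))%:~R = f (tail (alpha d)) - f (tail d)) ->
    forall d, numq (f (tail (alpha d)) - f v0) = numq (f (tail d) - f v0) + sel b (dl d).
  move=> Hf d; apply: (@intr_inj rat).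
  rewrite intrD !(NE f b Hf) Hf; ring.
pose Lf v := ((f0 v0).1 + numq (f1 v - f1 v0), (f0 v0).2 + numq (f2 v - f2 v0)).
have Lstep d : Lf (tail (alpha d)) = padd (Lf (tail d)) (dl d).
  by rewrite /Lf /padd /= (Nlift f1 true Hf1 d) (Nlift f2 false Hf2 d) !addrA.
have Lv0 : Lf v0 = f0 v0.
  by rewrite /Lf !subrr; case: (f0 v0) => a b /=; rewrite !addr0.
have Bv0 : onB tail alpha sigma (Some od) v0.
  by apply/existsP; exists od; rewrite connect0 eqxx.
have HL v : Thue (Lf v) = psi v /\ Tcol (Lf v) = chi v.
  apply: (@conn_pred _ (adjG tail alpha) (fun w => Thue (Lf w) = psi w /\ Tcol (Lf w) = chi w)
             v0 v _ _ (Hconn v0 v)); last first.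
    have [th tc] := f0B v0 Bv0; by rewrite Lv0 th tc chiB.
  move=> u w /existsP [d /andP [/eqP <- /eqP <-]] [hu cu].
  rewrite Lstep /dl -hu -cu.
  have n1 : Thue (Lf (tail d)) != psi (tail (alpha d)) by rewrite hu; exact: Hpsi'.
  have n2 : Tcol (Lf (tail d)) != chi (tail (alpha d)) by rewrite cu; exact: Hchi'.
  by have [_ [-> ->]] := @step_ok _ _ _ (psi_lt _) n1 n2.
have Ladj d : Tadj (Lf (tail d)) (Lf (tail (alpha d))).
  have [hu cu] := HL (tail d).
  rewrite Lstep /dl -hu -cu.
  have n1 : Thue (Lf (tail d)) != psi (tail (alpha d)) by rewrite hu; exact: Hpsi'.
  have n2 : Tcol (Lf (tail d)) != chi (tail (alpha d)) by rewrite cu; exact: Hchi'.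
  by have [-> _] := @step_ok _ _ _ (psi_lt _) n1 n2.
have LB v : onB tail alpha sigma (Some od) v -> Lf v = f0 v.
  move=> /existsP [e /andP [oe /eqP <-]].
  suff : fconnect fc od e /\ Lf (tail e) = f0 (tail e) by case.
  apply: (@conn_pred _ (frel fc) (fun e => fconnect fc od e /\ Lf (tail e) = f0 (tail e))
           od e _ _ oe); last by rewrite connect0 Lv0.
  move=> e1 e2 /eqP <- [o1 h1]; split; first exact: connect_trans o1 (fconnect1 _ _).
  by rewrite tail_fc Lstep h1 outer_edge.
exists (fun v => Tcol (retract z (Lf v))); split.
- move=> v _; have [_ hc] := Tadj_hue_col (retract_near z (Lf v)).
  by rewrite -Hzc eq_sym.
- move=> u v hu hv /existsP [d /andP [/eqP tu /eqP tv]].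
  rewrite -tu -tv in hu hv *.
  have hu' : Thue (Lf (tail d)) != Thue z.
    by rewrite Hzh (proj1 (HL _)) (inj_eq val_inj).
  have hv' : Thue (Lf (tail (alpha d))) != Thue z.
    by rewrite Hzh (proj1 (HL _)) (inj_eq val_inj).
  by have [_ hc] := Tadj_hue_col (@retract_adj _ _ _ (Ladj d) hu' hv').
- move=> v hv vB; rewrite (LB v vB).
  have [th tc] := f0B v vB.
  case: (f0hex v vB) => [e|adj].
    by move: hv; rewrite -(inj_eq val_inj) /= -th e Hzh eqxx.
  by rewrite retract_fix.
Qed.
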